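(* Let $c\in V$ and let $c=a+b$ be an $X2$-decomposition with $x_0=\|a\|_X$ and $y_0=\|b\|_Y$ (so $y_0=h^c_{YX}(x_0)$). Then: (1) $\int_0^{\|c\|_X} h^c_{YX}(x)\,dx=\tfrac12\|c\|_2^2$; (2) $\int_{x_0}^{\|c\|_X} h^c_{YX}(x)\,dx=\tfrac12\|b\|_2^2$; (3) the area of the region $\{(x,y): 0\le x\le \|c\|_X,\ y_0\le y\le h^c_{YX}(x)\}$ equals $\tfrac12\|a\|_2^2$; (4) $x_0y_0=\langle a,b\rangle$.
   Context: $V$ is a finite dimensional real vector space with a positive definite symmetric bilinear form $\langle\cdot,\cdot\rangle$ and $\|v\|_2=\sqrt{\langle v,v\rangle}$; $\|\cdot\|_X$ is a norm on $V$ with dual norm $\|v\|_Y=\max\{\langle v,w\rangle:\|w\|_X=1\}$. A decomposition $c=a+b$ is an $X2$-decomposition if for every decomposition $c=a'+b'$ we have $\|a'\|_X>\|a\|_X$, or $\|b'\|_2>\|b\|_2$, or $(\|a'\|_X,\|b'\|_2)=(\|a\|_X,\|b\|_2)$. For $x\in[0,\|c\|_X]$ let $\alpha^c_{2X}(x)$ be the unique $a\in V$ minimizing $\|c-a\|_2$ subject to $\|a\|_X\le x$, and define $h^c_{YX}(x)=\|c-\alpha^c_{2X}(x)\|_Y$ (the Pareto sub-frontier; $h^c_{YX}$ is a decreasing continuous function $[0,\|c\|_X]\to[0,\|c\|_Y]$, and for every $X2$-decomposition $c=a+b$ one has $a=\alpha^c_{2X}(\|a\|_X)$). *)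

(* Defs.v *)
From Stdlib Require Import Reals ClassicalEpsilon.
From mathcomp Require Import all_boot.
Set Implicit Arguments. Unset Strict Implicit. Unset Printing Implicit Defensive.
Open Scope R_scope.

(* V = R^n, a finite dimensional real inner product space (every such space is
   isometric to R^n with the standard dot product). *)
Definition Vec (n : nat) := 'I_n -> R.

Definition vadd n (u v : Vec n) : Vec n := fun i => u i + v i.
Definition vsub n (u v : Vec n) : Vec n := fun i => u i - v i.
Definition vscale n (r : R) (v : Vec n) : Vec n := fun i => r * v i.

Definition inner n (u v : Vec n) : R := \big[Rplus/0]_(i < n) (u i * v i).
Definition norm2 n (v : Vec n) : R := sqrt (inner v v).

Definition is_norm n (nX : Vec n -> R) : Prop :=
  (forall v, 0 <= nX v) /\
  (forall v, nX v = 0 -> v = (fun _ => 0)) /\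
  (forall r v, nX (vscale r v) = Rabs r * nX v) /\
  (forall u v, nX (vadd u v) <= nX u + nX v).

Definition is_dual_value n (nX : Vec n -> R) (v : Vec n) (y : R) : Prop :=
  (exists w, nX w = 1 /\ inner v w = y) /\
  (forall w, nX w = 1 -> inner v w <= y).
Definition dual_norm n (nX : Vec n -> R) (v : Vec n) : R :=
  epsilon (inhabits 0) (is_dual_value nX v).

Definition is_X2_decomp n (nX : Vec n -> R) (c a b : Vec n) : Prop :=
  c = vadd a b /\
  forall a' b', c = vadd a' b' ->
    nX a' > nX a \/ norm2 b' > norm2 b \/ (nX a' = nX a /\ norm2 b' = norm2 b).

Definition is_alpha n (nX : Vec n -> R) (c : Vec n) (x : R) (a : Vec n) : Prop :=
  nX a <= x /\ forall a', nX a' <= x -> norm2 (vsub c a) <= norm2 (vsub c a').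
Definition alpha2X n (nX : Vec n -> R) (c : Vec n) (x : R) : Vec n :=
  epsilon (inhabits (fun _ => 0)) (is_alpha nX c x).

Definition hYX n (nX : Vec n -> R) (c : Vec n) (x : R) : R :=
  dual_norm nX (vsub c (alpha2X nX c x)).

(* Main.v *)
Require Import Defs.
From Stdlib Require Import Reals Lra Lia FunctionalExtensionality ClassicalEpsilon.
From Coquelicot Require Import Coquelicot.
Lemma ptd_le ptd : pointed_subdiv ptd -> SF_h ptd <= seq.last (SF_h ptd) (SF_lx ptd).
Proof.
induction ptd as [x0|[x y] s IH] using SF_cons_ind; intros H.
- simpl. lra.
- rewrite SF_lx_cons. simpl.
  assert (H0 := H 0%nat). simpl in H0.
  specialize (IH (ptd_cons _ _ H)).
  assert (x <= y <= SF_h s) by (apply H0; unfold SF_size; simpl; lia).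
  simpl in IH. lra.
Qed.

Section IL.
Variables (g Phi : R -> R) (a b : R).
Hypothesis S : forall x x', a <= x -> x <= x' -> x' <= b ->
  (x' - x) * g x' <= Phi x - Phi x' <= (x' - x) * g x.

Lemma RS_bound d ptd : pointed_subdiv ptd -> a <= SF_h ptd ->
  seq.last (SF_h ptd) (SF_lx ptd) <= b -> seq_step (SF_lx ptd) <= d ->
  Rabs (Riemann_sum g ptd - (Phi (SF_h ptd) - Phi (seq.last (SF_h ptd) (SF_lx ptd))))
   <= d * (g (SF_h ptd) - g (seq.last (SF_h ptd) (SF_lx ptd))).
Proof.
induction ptd as [x0|[x y] s IH] using SF_cons_ind; intros H Ha Hb Hd.
- simpl. unfold Riemann_sum. simpl. rewrite Rminus_diag. 
  rewrite Rminus_diag, Rabs_R0; lra.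
- rewrite Riemann_sum_cons. 
  assert (H0 := H 0%nat). simpl in H0.
  assert (Hxy : x <= y <= SF_h s) by (apply H0; unfold SF_size; simpl; lia).
  assert (Hs := ptd_le _ (ptd_cons _ _ H)).
  specialize (IH (ptd_cons _ _ H)).
  simpl in *.
  set (x1 := SF_h s) in *. set (L := seq.last x1 (seq.unzip1 (SF_t s))) in *.
  assert (Hd' : Rmax (Rabs (x1 - x)) (seq_step (SF_lx s)) <= d) by exact Hd.
  assert (Hd1 : Rabs (x1 - x) <= d) by (eapply Rle_trans; [apply Rmax_l|exact Hd']).
  assert (Hd2 : seq_step (SF_lx s) <= d) by (eapply Rle_trans; [apply Rmax_r|exact Hd']).
  assert (IH' : Rabs (Riemann_sum g s - (Phi x1 - Phi L)) <= d * (g x1 - g L)) by (apply IH; lra).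
  rewrite Rabs_right in Hd1 by lra.
  assert (Sx := S x x1 ltac:(lra) ltac:(lra) ltac:(lra)).
  assert (Mon : x < x1 -> g x1 <= g y <= g x).
  { intros Hlt; split.
    - destruct (Req_dec y x1) as [->|Hne]; [lra|].
      assert (T := S y x1 ltac:(lra) ltac:(lra) ltac:(lra)).
      assert (0 < x1 - y) by lra. nra.
    - destruct (Req_dec y x) as [->|Hne]; [lra|].
      assert (T := S x y ltac:(lra) ltac:(lra) ltac:(lra)).
      assert (0 < y - x) by lra. nra. }
  unfold plus, scal; simpl; unfold mult; simpl.
  assert (E : Rabs ((x1 - x) * g y - (Phi x - Phi x1)) <= d * (g x - g x1)).
  { destruct (Req_dec x x1) as [<-|Hne].
    - replace ((x - x) * g y - (Phi x - Phi x)) with 0 by ring. rewrite Rabs_R0. lra.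
    - specialize (Mon ltac:(lra)). apply Rabs_le. split; nra. }
  assert (GL : g L <= g x1).
  { destruct (Req_dec x1 L) as [Heq|Hne]; [rewrite Heq; lra|].
    assert (T := S x1 L ltac:(lra) ltac:(lra) ltac:(lra)).
    assert (0 < L - x1) by lra. nra. }
  replace ((x1 - x) * g y + Riemann_sum g s - (Phi x - Phi L)) with
    (((x1 - x) * g y - (Phi x - Phi x1)) + (Riemann_sum g s - (Phi x1 - Phi L))) by ring.
  eapply Rle_trans; [apply Rabs_triang|]. lra.
Qed.
End IL.

Lemma IL (g Phi : R -> R) (a b : R) : a <= b ->
  (forall x x', a <= x -> x <= x' -> x' <= b ->
    (x' - x) * g x' <= Phi x - Phi x' <= (x' - x) * g x) ->
  is_RInt g a b (Phi a - Phi b).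
Proof.
intros Hab S P [eps Heps].
unfold filtermap, Riemann_fine, within, locally_dist.
destruct (Req_dec a b) as [<-|Hne].
- exists (mkposreal 1 Rlt_0_1). intros ptd _ _.
  apply Heps. replace (a - a) with 0 by ring. rewrite sign_0.
  unfold ball; simpl; unfold AbsRing_ball, abs, minus, plus, opp; simpl.
  unfold scal; simpl; unfold mult; simpl.
  match goal with |- Rabs ?e < _ => replace e with 0 by ring end.
  rewrite Rabs_R0. apply cond_pos.
- assert (Gab : g b <= g a).
  { assert (T := S a b ltac:(lra) ltac:(lra) ltac:(lra)). assert (0 < b - a) by lra. nra. }
  assert (Hd : 0 < eps / (g a - g b + 1)).
  { apply Rdiv_lt_0_compat; [apply cond_pos|lra]. }
  exists (mkposreal _ Hd). intros ptd Hst [Hptd [Hh Hl]].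
  simpl in Hst.
  rewrite Rmin_left in Hh by lra. rewrite Rmax_right in Hl by lra.
  rewrite sign_eq_1 by lra.
  apply Heps.
  assert (B := RS_bound g Phi a b S (seq_step (SF_lx ptd)) ptd Hptd ltac:(lra) ltac:(lra) ltac:(lra)).
  rewrite Hl in B. rewrite Hh in B.
  unfold ball; simpl; unfold AbsRing_ball, abs, minus, plus, opp; simpl.
  unfold scal; simpl; unfold mult; simpl. rewrite Rmult_1_l.
  eapply Rle_lt_trans; [exact B|].
  assert (E : eps / (g a - g b + 1) * (g a - g b + 1) = eps) by (field; lra).
  assert (0 <= seq_step (SF_lx ptd)) by apply seq_step_ge_0.
  assert (0 < eps) by apply cond_pos.
  nra.
Qed.

From mathcomp Require Import all_boot.
From mathcomp Require Import Rstruct.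
Set Implicit Arguments. Unset Strict Implicit.
Open Scope R_scope.

Definition contv n (F : Vec n -> R) := forall u eps, 0 < eps -> exists d, 0 < d /\
  forall v, (forall i, Rabs (u i - v i) < d) -> Rabs (F u - F v) < eps.

Section Cont.
Variable n : nat.

Lemma contv_const (k : R) : contv (fun _ : Vec n => k).
Proof. intros u eps He. exists 1; split; [lra|]. intros v _. rewrite Rminus_diag Rabs_R0; lra. Qed.

Lemma contv_coord (i : 'I_n) : contv (fun v : Vec n => v i).
Proof. intros u eps He. exists eps; split; [lra|]. intros v H. apply H. Qed.

Lemma contv_add (F G : Vec n -> R) : contv F -> contv G -> contv (fun v => F v + G v).
Proof.
intros cF cG u eps He.
destruct (cF u (eps/2) ltac:(lra)) as [d1 [d1p H1]].
destruct (cG u (eps/2) ltac:(lra)) as [d2 [d2p H2]].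
exists (Rmin d1 d2); split; [apply Rmin_glb_lt; lra|].
intros v Hv.
assert (A1 := H1 v (fun i => Rlt_le_trans _ _ _ (Hv i) (Rmin_l _ _))).
assert (A2 := H2 v (fun i => Rlt_le_trans _ _ _ (Hv i) (Rmin_r _ _))).
replace (F u + G u - (F v + G v)) with ((F u - F v) + (G u - G v)) by ring.
eapply Rle_lt_trans; [apply Rabs_triang|]. lra.
Qed.

Lemma contv_opp (F : Vec n -> R) : contv F -> contv (fun v => - F v).
Proof.
intros cF u eps He. destruct (cF u eps He) as [d [dp H]]. exists d; split; [lra|].
intros v Hv. replace (- F u - - F v) with (- (F u - F v)) by ring. rewrite Rabs_Ropp. auto.
Qed.

Lemma contv_mul (F G : Vec n -> R) : contv F -> contv G -> contv (fun v => F v * G v).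
Proof.
intros cF cG u eps He.
set (A := Rabs (F u) + 1). set (B := Rabs (G u) + 1).
assert (Ap : 0 < A) by (unfold A; generalize (Rabs_pos (F u)); lra).
assert (Bp : 0 < B) by (unfold B; generalize (Rabs_pos (G u)); lra).
destruct (cF u (eps/(2*B)) ltac:(apply Rdiv_lt_0_compat; lra)) as [d1 [d1p H1]].
destruct (cG u (Rmin 1 (eps/(2*A))) ltac:(apply Rmin_glb_lt; [lra|apply Rdiv_lt_0_compat; lra])) as [d2 [d2p H2]].
exists (Rmin d1 d2); split; [apply Rmin_glb_lt; lra|].
intros v Hv.
assert (A1 := H1 v (fun i => Rlt_le_trans _ _ _ (Hv i) (Rmin_l _ _))).
assert (A2 := H2 v (fun i => Rlt_le_trans _ _ _ (Hv i) (Rmin_r _ _))).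
assert (A21 : Rabs (G u - G v) < 1) by (eapply Rlt_le_trans; [exact A2|apply Rmin_l]).
assert (A22 : Rabs (G u - G v) < eps/(2*A)) by (eapply Rlt_le_trans; [exact A2|apply Rmin_r]).
assert (Gv : Rabs (G v) <= B).
{ unfold B. replace (G v) with (G u - (G u - G v)) by ring.
  eapply Rle_trans; [apply Rabs_triang|]. rewrite Rabs_Ropp. lra. }
replace (F u * G u - F v * G v) with ((F u - F v) * G v + F u * (G u - G v)) by ring.
eapply Rle_lt_trans; [apply Rabs_triang|]. rewrite !Rabs_mult.
assert (E1 : Rabs (F u - F v) * Rabs (G v) <= eps/(2*B) * B).
{ apply Rmult_le_compat; try apply Rabs_pos; lra. }
assert (FA : Rabs (F u) <= A) by (unfold A; lra).
assert (E2 : Rabs (F u) * Rabs (G u - G v) < A * (eps/(2*A))).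
{ apply Rle_lt_trans with (A * Rabs (G u - G v)).
  apply Rmult_le_compat_r; [apply Rabs_pos|lra].
  apply Rmult_lt_compat_l; lra. }
replace (eps/(2*B)*B) with (eps/2) in E1 by (field; lra).
replace (A*(eps/(2*A))) with (eps/2) in E2 by (field; lra).
lra.
Qed.

Lemma contv_ext (F G : Vec n -> R) : (forall v, F v = G v) -> contv F -> contv G.
Proof.
intros E cF u eps He. destruct (cF u eps He) as [d [dp H]]. exists d; split; [lra|].
intros v Hv. rewrite -!E. auto.
Qed.

Lemma contv_sum (F : 'I_n -> Vec n -> R) : (forall i, contv (F i)) ->
  contv (fun v => \big[Rplus/0]_(i < n) F i v).
Proof.
intros cF.
assert (G : forall r : seq 'I_n, contv (fun v => \big[Rplus/0]_(i <- r) F i v)).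
{ intros r; induction r as [|i r IH].
  - eapply (@contv_ext (fun _ => 0)); [intros v; by rewrite big_nil|apply contv_const].
  - eapply contv_ext; [intros v; by rewrite big_cons|]. by apply contv_add. }
apply G.
Qed.

Lemma contv_abs (F : Vec n -> R) : contv F -> contv (fun v => Rabs (F v)).
Proof.
intros cF u eps He. destruct (cF u eps He) as [d [dp H]]. exists d; split; [lra|].
intros v Hv. eapply Rle_lt_trans; [apply Rabs_triang_inv2|]. auto.
Qed.
End Cont.

Section Inner.
Variable n : nat.
Implicit Types u v w : Vec n.
Definition vzero : Vec n := fun _ => 0.

Lemma inner_sym u v : inner u v = inner v u.
Proof. rewrite /inner. apply: eq_bigr => i _. ring. Qed.

Lemma inner_addl u v w : inner (vadd u v) w = inner u w + inner v w.
Proof. rewrite /inner -big_split. apply: eq_bigr => i _. rewrite /vadd /=. ring. Qed.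

Lemma inner_subl u v w : inner (vsub u v) w = inner u w - inner v w.
Proof.
rewrite /inner.
have -> : \big[Rplus/0]_(i < n) (vsub u v i * w i) = \big[Rplus/0]_(i < n) (u i * w i + (-1) * (v i * w i)).
  apply: eq_bigr => i _. rewrite /vsub. ring.
rewrite big_split -big_distrr /=. ring.
Qed.

Lemma inner_scalel r u v : inner (vscale r u) v = r * inner u v.
Proof. rewrite /inner big_distrr. apply: eq_bigr => i _. rewrite /vscale /=. ring. Qed.

Lemma inner_addr u v w : inner w (vadd u v) = inner w u + inner w v.
Proof. by rewrite inner_sym inner_addl (inner_sym u) (inner_sym v). Qed.
Lemma inner_subr u v w : inner w (vsub u v) = inner w u - inner w v.
Proof. by rewrite inner_sym inner_subl (inner_sym u) (inner_sym v). Qed.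
Lemma inner_scaler r u v : inner v (vscale r u) = r * inner v u.
Proof. by rewrite inner_sym inner_scalel inner_sym. Qed.

Lemma inner0r u : inner u vzero = 0.
Proof. rewrite /inner big1 // => i _. rewrite /vzero. ring. Qed.
Lemma inner0l u : inner vzero u = 0.
Proof. by rewrite inner_sym inner0r. Qed.

Lemma sum_ge0 (F : 'I_n -> R) : (forall i, 0 <= F i) -> 0 <= \big[Rplus/0]_(i < n) F i.
Proof. intros H. apply: (big_ind (fun x => 0 <= x)); [lra|intros; lra|]. auto. Qed.

Lemma inner_ge0 u : 0 <= inner u u.
Proof. apply sum_ge0 => i. apply Rle_0_sqr. Qed.

Lemma coord_sq_le u i : u i * u i <= inner u u.
Proof.
rewrite /inner (bigD1 i) //=.
match goal with |- _ <= _ + ?X => assert (0 <= X) end.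
{ apply: (big_ind (fun x => 0 <= x)); [lra|intros; lra|]. intros; apply Rle_0_sqr. }
lra.
Qed.

Lemma inner_eq0 u : inner u u = 0 -> u = vzero.
Proof.
intros H. apply functional_extensionality => i.
assert (A := coord_sq_le u i). assert (0 <= u i * u i) by apply Rle_0_sqr.
rewrite /vzero. nra.
Qed.

Lemma norm2_sq u : norm2 u ^ 2 = inner u u.
Proof. rewrite /norm2. rewrite -> pow2_sqrt; [done|apply inner_ge0]. Qed.

Lemma norm2_ge0 u : 0 <= norm2 u.
Proof. apply sqrt_pos. Qed.

Lemma norm2_le u v : inner u u <= inner v v -> norm2 u <= norm2 v.
Proof. intros H. apply sqrt_le_1_alt. exact H. Qed.

Lemma norm2_le_inv u v : norm2 u <= norm2 v -> inner u u <= inner v v.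
Proof. intros H. rewrite -!norm2_sq. assert (0 <= norm2 u) by apply norm2_ge0. nra. Qed.

Lemma coord_abs_le u i : Rabs (u i) <= norm2 u.
Proof.
rewrite -(sqrt_Rsqr_abs (u i)). apply sqrt_le_1_alt. rewrite /Rsqr. apply coord_sq_le.
Qed.
End Inner.

Section Norm.
Variables (n : nat) (nX : Vec n -> R) (HX : is_norm nX).
Implicit Types u v w : Vec n.

Lemma nX_ge0 v : 0 <= nX v. Proof. by case: HX. Qed.
Lemma nX_def v : nX v = 0 -> v = (@vzero n). Proof. by case: HX => _ [H _]; apply H. Qed.
Lemma nX_scale r v : nX (vscale r v) = Rabs r * nX v. Proof. by case: HX => _ [_ [H _]]. Qed.
Lemma nX_tri u v : nX (vadd u v) <= nX u + nX v. Proof. by case: HX => _ [_ [_ H]]. Qed.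

Lemma nX_zero : nX ((@vzero n)) = 0.
Proof.
have -> : (@vzero n) = vscale 0 ((@vzero n)) by apply functional_extensionality => i; rewrite /vscale /vzero; ring.
rewrite nX_scale Rabs_R0; ring.
Qed.

Lemma nX_sub_sym u v : nX (vsub u v) = nX (vsub v u).
Proof.
have -> : vsub u v = vscale (-1) (vsub v u) by apply functional_extensionality => i; rewrite /vscale /vsub; ring.
rewrite nX_scale Rabs_Ropp Rabs_R1; ring.
Qed.

Lemma nX_rev u v : nX u <= nX v + nX (vsub u v).
Proof.
have {1}-> : u = vadd v (vsub u v) by apply functional_extensionality => i; rewrite /vadd /vsub; ring.
apply nX_tri.
Qed.

Lemma nX_bound : exists K, 0 <= K /\ forall u t, 0 <= t -> (forall i, Rabs (u i) <= t) -> nX u <= K * t.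
Proof.
have P : forall k : nat, exists K, 0 <= K /\ forall u t, 0 <= t -> (forall i, Rabs (u i) <= t) ->
   (forall i : 'I_n, (k <= i)%N -> u i = 0) -> nX u <= K * t.
{ elim=> [|k [K [K0 IH]]].
  - exists 0; split; [lra|]. move=> u t t0 _ Hz.
    have -> : u = (@vzero n) by apply functional_extensionality => i; apply Hz.
    rewrite nX_zero; lra.
  - case: (ltnP k n) => Hk.
    + set ek := Ordinal Hk.
      set e : Vec n := fun i => if i == ek then 1 else 0.
      exists (K + nX e); split; first by move: (nX_ge0 e); lra.
      move=> u t t0 Hb Hz.
      set u' : Vec n := fun i => if i == ek then 0 else u i.
      have Eu : u = vadd u' (vscale (u ek) e).
        apply functional_extensionality => i; rewrite /vadd /u' /vscale /e.
        case: eqP => [->|_]; ring.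
      have A1 : nX u' <= K * t.
        apply: IH => //.
        * move=> i; rewrite /u'; case: eqP => _; [rewrite Rabs_R0 //| apply Hb].
        * move=> i Hi; rewrite /u'; case: eqP => // Hne; apply Hz.
          rewrite ltn_neqAle Hi andbT; apply/eqP => Heq; apply Hne; apply val_inj; rewrite /= -Heq //.
      rewrite Eu. eapply Rle_trans; [apply nX_tri|]. rewrite nX_scale.
      have := Hb ek. have := nX_ge0 e. nra.
    + exists K; split => // u t t0 Hb Hz. apply: IH => // i Hi.
      exfalso; move: (leq_trans Hk Hi); rewrite leqNgt ltn_ord //. }
have [K [K0 H]] := P n. exists K; split => // u t t0 Hb. apply: H => // i Hi.
exfalso; move: Hi; rewrite leqNgt ltn_ord //.
Qed.

Lemma contv_nX : contv nX.
Proof.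
have [K [K0 HK]] := nX_bound.
move=> u eps He. exists (eps / (K + 1)); split; first by apply Rdiv_lt_0_compat; lra.
move=> v Hv.
have B : nX (vsub u v) <= K * (eps / (K + 1)).
  apply HK; first by (apply Rlt_le; apply Rdiv_lt_0_compat; lra).
  move=> i; apply Rlt_le; apply Hv.
have E : K * (eps / (K + 1)) < eps.
  have -> : K * (eps / (K+1)) = eps - eps / (K + 1) by field; lra.
  have : 0 < eps / (K + 1) by apply Rdiv_lt_0_compat; lra. lra.
have R1 := nX_rev u v. have R2 := nX_rev v u. rewrite (nX_sub_sym v u) in R2.
apply Rabs_def1; lra.
Qed.
End Norm.

From mathcomp Require all_order all_algebra all_classical all_reals all_analysis Rstruct_topology.
Module EVTm.
Import mathcomp.boot.all_boot mathcomp.order.all_order mathcomp.algebra.all_algebra mathcomp.classical.all_classical mathcomp.reals.all_reals mathcomp.analysis.all_analysis.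
Import Rstruct Rstruct_topology.
Import Order.TTheory GRing.Theory Num.Theory.
Local Open Scope classical_set_scope.
Local Open Scope ring_scope.

Lemma EVT n (F G : Vec n -> R) (M : R) v0 : Rle 0 M -> contv F -> contv G -> Rle (G v0) 0 ->
  (forall v, Rle (G v) 0 -> forall i, Rle (Rabs (v i)) M) ->
  exists v, Rle (G v) 0 /\ forall u, Rle (G u) 0 -> Rle (F u) (F v).
Proof.
move=> M0 cF cG G0 bG.
pose tr (x : 'rV[R]_n) : Vec n := fun i => x ord0 i.
have trK : forall u : Vec n, tr (\row_i u i) = u.
  by move=> u; apply: boolp.funext => i; rewrite /tr mxE.
pose A := [set x : 'rV[R]_n | (G (tr x) <= 0)%R].
have ctr : forall H : Vec n -> R, contv H -> continuous (fun x => H (tr x)).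
  move=> H cH x s /= /(nbhs_ballP (H (tr x))) [e e0 es].
  have e0' : Rlt 0 e by apply/RltP.
  have [d [d0 Hd]] := cH (tr x) e e0'.
  apply/nbhs_ballP; exists d; first by apply/RltP.
  move=> y [_ xy]; apply: es.
  rewrite /ball /= -/(Rabs _); apply/RltP; apply: Hd => i.
  by have := xy ord0 i; rewrite /ball /= => /RltP.
have [c cA cmax] : exists2 c, c \in A & forall t, t \in A -> F (tr t) <= F (tr c).
  apply: compact_EVT_max.
  - by exists (\row_i v0 i); rewrite /A /= trK; apply/RleP.
  - apply: bounded_closed_compact.
    + exists M; split; first by rewrite num_real.
      move=> r Mr x; rewrite /A /= => /RleP Gx.
      rewrite [X in X <= _]mx_normrE; apply/bigmax_leP; split.
        by apply: le_trans (ltW Mr); apply/RleP.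
      case=> i1 j _ /=; rewrite (ord1 i1).
      apply: le_trans (ltW Mr); apply/RleP; exact: (bG _ Gx j).
    + have -> : A = (fun x => G (tr x)) @^-1` [set y | y <= 0].
        by [].
      apply: preimage_closed; last exact: closed_le.
      by move=> x _; apply: ctr.
  - by apply: continuous_subspaceT; apply: ctr.
exists (tr c); split.
  by move: cA; rewrite inE /A /= => /RleP.
move=> u Gu; rewrite -(trK u); apply/RleP; apply: cmax.
by rewrite inE /A /= trK; apply/RleP.
Qed.
End EVTm.

Lemma abs_le0 x : Rabs x <= 0 -> x = 0.
Proof. move=> H. have := Rle_abs x. have := Rle_abs (- x). rewrite Rabs_Ropp. lra. Qed.

Section Main.
Variables (n : nat) (nX : Vec n -> R) (HX : is_norm nX) (i0 : 'I_n).
Implicit Types u v w a : Vec n.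

Definition unitv : Vec n := fun i => if i == i0 then 1 else 0.

Lemma inner_unitv : inner unitv unitv = 1.
Proof.
rewrite /inner (bigD1 i0) //= big1 => [|i Hi]; rewrite /unitv.
- rewrite eqxx. ring.
- by rewrite (negbTE Hi); ring.
Qed.

Lemma unitv_nz : 0 < nX unitv.
Proof.
have := nX_ge0 HX unitv. case/Rle_lt_or_eq_dec => // /esym /(nX_def HX) E.
have := inner_unitv. rewrite E inner0r. lra.
Qed.

Lemma contv_inner_self (c : Vec n) : contv (fun a => inner (vsub c a) (vsub c a)).
Proof.
apply: contv_sum => i. apply: contv_mul.
- apply: (@contv_ext _ (fun v => c i + - v i)); first by move=> v; rewrite /vsub.
  apply: contv_add; [apply contv_const|apply contv_opp; apply contv_coord].
- apply: (@contv_ext _ (fun v => c i + - v i)); first by move=> v; rewrite /vsub.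
  apply: contv_add; [apply contv_const|apply contv_opp; apply contv_coord].
Qed.

Lemma contv_inner_l (v : Vec n) : contv (fun w => inner v w).
Proof. apply: contv_sum => i. apply: contv_mul; [apply contv_const|apply contv_coord]. Qed.

Lemma inner_neg w : inner (vsub (@vzero n) w) (vsub (@vzero n) w) = inner w w.
Proof. rewrite /inner; apply: eq_bigr => i _; rewrite /vsub /vzero; ring. Qed.

Lemma lower_bound : exists m, 0 < m /\ forall w, m * norm2 w <= nX w.
Proof.
have cG : contv (fun w => Rabs (inner w w - 1)).
  apply: contv_abs. apply: (@contv_ext _ (fun w => inner (vsub (@vzero n) w) (vsub (@vzero n) w) + - 1)).
    by move=> w; rewrite inner_neg.
  apply: contv_add; [apply contv_inner_self|apply contv_const].
have cF : contv (fun w => - nX w) by apply: contv_opp; apply: contv_nX.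
have G0 : Rabs (inner unitv unitv - 1) <= 0 by rewrite inner_unitv Rminus_diag Rabs_R0; lra.
have Gb : forall v, Rabs (inner v v - 1) <= 0 -> forall i, Rabs (v i) <= 1.
  move=> v Gv i. have E : inner v v = 1.
    apply: Rminus_diag_uniq; apply: abs_le0; lra.
  have := coord_abs_le v i; rewrite /norm2 E sqrt_1; lra.
have [w [Gw Hw]] := @EVTm.EVT n _ _ 1 unitv ltac:(lra) cF cG G0 Gb.
have Ew : inner w w = 1.
  apply: Rminus_diag_uniq; apply: abs_le0; lra.
exists (nX w); split.
  have := nX_ge0 HX w. case/Rle_lt_or_eq_dec => // /esym /(nX_def HX) E.
  move: Ew. rewrite E inner0r. lra.
move=> u.
have [Z|NZ] := Req_dec (inner u u) 0.
  rewrite /norm2 Z sqrt_0 Rmult_0_r. exact: (nX_ge0 HX u).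
have up : 0 < inner u u by have := inner_ge0 u; lra.
set s := norm2 u.
have sp : 0 < s by apply: sqrt_lt_R0.
have := Hw (vscale (/ s) u).
rewrite (nX_scale HX) (Rabs_right (/ s)); last by (apply Rle_ge; apply Rlt_le; apply Rinv_0_lt_compat).
rewrite inner_scalel inner_scaler.
have E2 : s * s = inner u u by rewrite /s /norm2 sqrt_sqrt //; lra.
have -> : / s * (/ s * inner u u) = 1 by rewrite -E2; field; lra.
rewrite Rminus_diag Rabs_R0 => /(_ ltac:(lra)) H.
have : s * nX w <= s * (/ s * nX u) by apply Rmult_le_compat_l; lra.
have -> : s * (/ s * nX u) = nX u by field; lra.
lra.
Qed.
Lemma dual_spec v : is_dual_value nX v (dual_norm nX v).
Proof.
rewrite /dual_norm. apply: epsilon_spec.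
have [m [mp Hm]] := lower_bound.
set e := vscale (/ nX unitv) unitv.
have ne : nX e = 1.
  rewrite /e (nX_scale HX) Rabs_right; last by (apply Rle_ge; apply Rlt_le; apply Rinv_0_lt_compat; apply unitv_nz).
  field. have := unitv_nz; lra.
have cG : contv (fun w => Rabs (nX w - 1)).
  apply: contv_abs. apply: contv_add; [apply (contv_nX HX)|apply contv_const].
have G0 : Rabs (nX e - 1) <= 0 by rewrite ne Rminus_diag Rabs_R0; lra.
have Gb : forall w, Rabs (nX w - 1) <= 0 -> forall i, Rabs (w i) <= / m.
  move=> w Gw i. have E : nX w = 1 by apply: Rminus_diag_uniq; apply: abs_le0.
  have := Hm w. rewrite E => H1.
  have : norm2 w <= / m.
    have -> : / m = / m * 1 by ring.
    have : / m * (m * norm2 w) <= / m * 1.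
      apply Rmult_le_compat_l => //; apply Rlt_le; apply Rinv_0_lt_compat; lra.
    have -> : / m * (m * norm2 w) = norm2 w by field; lra.
    done.
  have := coord_abs_le w i. lra.
have Mp : 0 <= / m by apply Rlt_le; apply Rinv_0_lt_compat.
have [w [Gw Hw]] := @EVTm.EVT n _ _ (/ m) e Mp (contv_inner_l v) cG G0 Gb.
exists (inner v w); split.
  exists w; split => //. by apply: Rminus_diag_uniq; apply: abs_le0.
move=> w' Hw'. apply: Hw. rewrite Hw' Rminus_diag Rabs_R0; lra.
Qed.

Lemma dual_att v : exists w, nX w = 1 /\ inner v w = dual_norm nX v.
Proof. by case: (dual_spec v). Qed.

Lemma dual_ub v w : inner v w <= nX w * dual_norm nX v.
Proof.
case: (dual_spec v) => _ Hub.
have [Z|NZ] := Req_dec (nX w) 0.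
  rewrite Z (nX_def HX Z) inner0r. lra.
have p : 0 < nX w by have := nX_ge0 HX w; lra.
have := Hub (vscale (/ nX w) w).
rewrite (nX_scale HX) Rabs_right; last by (apply Rle_ge; apply Rlt_le; apply Rinv_0_lt_compat).
rewrite inner_scaler.
have -> : / nX w * nX w = 1 by field; lra.
move=> /(_ erefl) H.
have : nX w * (/ nX w * inner v w) <= nX w * dual_norm nX v by apply Rmult_le_compat_l; lra.
have -> : nX w * (/ nX w * inner v w) = inner v w by field; lra.
done.
Qed.

Lemma dual_ge0 v : 0 <= dual_norm nX v.
Proof.
have [w [Hw Ew]] := dual_att v.
have := dual_ub v (vscale (-1) w).
rewrite (nX_scale HX) inner_scaler Hw Ew Rabs_Ropp Rabs_R1. lra.
Qed.

Variable c : Vec n.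

Lemma alpha_exists x : 0 <= x -> exists a, is_alpha nX c x a.
Proof.
move=> x0.
have [m [mp Hm]] := lower_bound.
have cG : contv (fun a => nX a + - x) by apply: contv_add; [apply (contv_nX HX)|apply contv_const].
have cF : contv (fun a => - inner (vsub c a) (vsub c a)) by apply: contv_opp; apply: contv_inner_self.
have G0 : nX (@vzero n) + - x <= 0 by rewrite (nX_zero HX); lra.
have Gb : forall a, nX a + - x <= 0 -> forall i, Rabs (a i) <= x / m.
  move=> a Ga i. have := Hm a => H1.
  have : norm2 a <= x / m.
    have : / m * (m * norm2 a) <= / m * x.
      apply Rmult_le_compat_l; [apply Rlt_le; apply Rinv_0_lt_compat; lra|lra].
    have -> : / m * (m * norm2 a) = norm2 a by field; lra.
    rewrite /Rdiv Rmult_comm. done.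
  have := coord_abs_le a i. lra.
have Mp : 0 <= x / m by apply Rmult_le_pos; [lra|apply Rlt_le; apply Rinv_0_lt_compat; lra].
have [a [Ga Ha]] := @EVTm.EVT n _ _ (x / m) (@vzero n) Mp cF cG G0 Gb.
exists a; split; first by lra.
move=> a' Ha'. apply: norm2_le. have := Ha a' ltac:(lra). lra.
Qed.

Lemma alpha_spec x : 0 <= x -> is_alpha nX c x (alpha2X nX c x).
Proof. move=> x0. rewrite /alpha2X. apply: epsilon_spec. exact: alpha_exists. Qed.

Lemma expand_sq (b d : Vec n) t : inner (vsub b (vscale t d)) (vsub b (vscale t d)) =
  inner b b - 2 * t * inner b d + t * t * inner d d.
Proof. rewrite !inner_subl !inner_subr !inner_scalel !inner_scaler (inner_sym d b). ring. Qed.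

Lemma VI x a a' : is_alpha nX c x a -> nX a' <= x -> inner (vsub c a) (vsub a' a) <= 0.
Proof.
move=> [Hax Hmin] Ha'.
set b := vsub c a. set d := vsub a' a.
have key : forall t, 0 < t -> t <= 1 -> 2 * t * inner b d <= t * t * inner d d.
  move=> t t0 t1.
  set at_ := vadd (vscale (1 - t) a) (vscale t a').
  have Hat : nX at_ <= x.
    eapply Rle_trans; [apply (nX_tri HX)|]. rewrite !(nX_scale HX) !Rabs_right; try lra.
    have := nX_ge0 HX a. have := nX_ge0 HX a'. nra.
  have := norm2_le_inv (Hmin at_ Hat).
  have -> : vsub c at_ = vsub b (vscale t d).
    apply functional_extensionality => i; rewrite /vsub /vadd /vscale /at_ /b /d /vsub /vadd /vscale; ring.
  rewrite expand_sq -/b. lra.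
have q0 := inner_ge0 d.
case: (Rle_lt_dec (inner b d) 0) => // p.
set t := Rmin 1 (inner b d / (inner d d + 1)).
have t0 : 0 < t by apply Rmin_glb_lt; [lra|apply Rdiv_lt_0_compat; lra].
have t1 : t <= 1 by apply Rmin_l.
have t2 : t <= inner b d / (inner d d + 1) by apply Rmin_r.
have := key t t0 t1.
have : t * (inner d d + 1) <= inner b d.
  have -> : inner b d = inner b d / (inner d d + 1) * (inner d d + 1) by field; lra.
  apply Rmult_le_compat_r; lra.
nra.
Qed.

Lemma S1 x a : 0 <= x -> is_alpha nX c x a -> x * dual_norm nX (vsub c a) <= inner (vsub c a) a.
Proof.
move=> x0 Ha.
have [w [Hw Ew]] := dual_att (vsub c a).
have := VI Ha (a' := vscale x w).
rewrite (nX_scale HX) Hw Rabs_right; last lra.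
move=> /(_ ltac:(lra)). rewrite inner_subr inner_scaler Ew. lra.
Qed.

Lemma S2 x a v : nX a <= x -> inner v a <= x * dual_norm nX v.
Proof.
move=> Ha. eapply Rle_trans; [apply dual_ub|]. apply Rmult_le_compat_r => //. apply dual_ge0.
Qed.

Definition fa a := inner (vsub c a) (vsub c a) / 2.

Lemma sandwich x a x' a' : 0 <= x -> 0 <= x' -> is_alpha nX c x a -> is_alpha nX c x' a' ->
  (x' - x) * dual_norm nX (vsub c a') <= fa a - fa a' <= (x' - x) * dual_norm nX (vsub c a).
Proof.
move=> x0 x0' Ha Ha'.
have A1 := S1 x0 Ha. have A2 := S1 x0' Ha'.
have B1 := S2 (vsub c a) (proj1 Ha'). have B2 := S2 (vsub c a') (proj1 Ha).
have P := inner_ge0 (vsub a a').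
rewrite /fa. move: A1 A2 B1 B2 P.
rewrite !inner_subl !inner_subr.
rewrite (inner_sym a c) (inner_sym a' c) (inner_sym a' a).
move=> A1 A2 B1 B2 P. split; nra.
Qed.

Lemma alpha_unique x a1 a2 : is_alpha nX c x a1 -> is_alpha nX c x a2 -> a1 = a2.
Proof.
move=> H1 H2.
have V1 := VI H1 (proj1 H2). have V2 := VI H2 (proj1 H1).
have E : inner (vsub a2 a1) (vsub a2 a1) = 0.
  have := inner_ge0 (vsub a2 a1). move: V1 V2.
  rewrite !inner_subl !inner_subr.
  have := inner_sym a1 c. have := inner_sym a2 c. have := inner_sym a2 a1. lra.
have := inner_eq0 E => Z. apply functional_extensionality => i.
have := f_equal (fun f => f i) Z. rewrite /vsub /vzero. lra.
Qed.

Lemma IL_Reals (g Phi : R -> R) (lo hi : R) : lo <= hi ->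
  (forall x x', lo <= x -> x <= x' -> x' <= hi ->
    (x' - x) * g x' <= Phi x - Phi x' <= (x' - x) * g x) ->
  exists pr : Riemann_integrable g lo hi, RiemannInt pr = Phi lo - Phi hi.
Proof.
move=> Hle HS. have I1 := @IL g Phi lo hi Hle HS.
exists (@Coquelicot.RInt.ex_RInt_Reals_0 g lo hi (ex_intro _ _ I1)).
by rewrite -Coquelicot.RInt.RInt_Reals (@Coquelicot.RInt.is_RInt_unique Coquelicot.Hierarchy.R_CompleteNormedModule g lo hi _ I1).
Qed.

Lemma main_pos a b (Hdec : is_X2_decomp nX c a b) :
  let x0 := nX a in
  let y0 := dual_norm nX b in
  (exists pr : Riemann_integrable (hYX nX c) 0 (nX c),
      RiemannInt pr = / 2 * norm2 c ^ 2) /\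
  (exists pr : Riemann_integrable (hYX nX c) x0 (nX c),
      RiemannInt pr = / 2 * norm2 b ^ 2) /\
  (exists pr : Riemann_integrable (fun x => Rmax (hYX nX c x - y0) 0) 0 (nX c),
      RiemannInt pr = / 2 * norm2 a ^ 2) /\
  x0 * y0 = inner a b.
Proof.
move=> x0 y0. case: Hdec => Hc Hp.
have bdef : vsub c a = b.
  apply functional_extensionality => i; rewrite Hc /vsub /vadd; ring.
have nz : norm2 (@vzero n) = 0 by rewrite /norm2 inner0r sqrt_0.
have Hx0X : x0 <= nX c.
  have E : c = vadd c (@vzero n) by apply functional_extensionality => i; rewrite /vadd /vzero; ring.
  case: (Hp _ _ E) => [H1|[H1|H1]]; rewrite /x0; [lra| |lra]. rewrite nz in H1. have := norm2_ge0 b. lra.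
have x0p : 0 <= x0 by apply: nX_ge0.
have Ha : is_alpha nX c x0 a.
  split; first by rewrite /x0; lra.
  move=> a' Ha'. rewrite bdef.
  have E : c = vadd a' (vsub c a') by apply functional_extensionality => i; rewrite /vadd /vsub; ring.
  case: (Hp _ _ E) => [H1|[H1|H1]]; rewrite -/x0 in H1; lra.
set X := nX c in Hx0X *.
set H := hYX nX c.
set phi := fun x => fa (alpha2X nX c x).
have SW : forall x x', 0 <= x -> 0 <= x' -> (x' - x) * H x' <= phi x - phi x' <= (x' - x) * H x.
  move=> x x' xp xp'. exact: sandwich xp xp' (alpha_spec xp) (alpha_spec xp').
have Hpos : forall x, 0 <= x -> 0 <= H x by move=> x _; apply: dual_ge0.
have phi0 : phi 0 = inner c c / 2.
  have [H1 _] := alpha_spec (Rle_refl 0).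
  have := nX_ge0 HX (alpha2X nX c 0) => H2.
  rewrite /phi /fa (nX_def HX (Rle_antisym _ _ H1 H2)).
  have -> : vsub c (@vzero n) = c by apply functional_extensionality => i; rewrite /vsub /vzero; ring.
  done.
have Xp : 0 <= X by apply: nX_ge0.
have phiX : phi X = 0.
  have [_ H1] := alpha_spec Xp.
  have := norm2_le_inv (H1 c (Rle_refl _)).
  have -> : vsub c c = @vzero n by apply functional_extensionality => i; rewrite /vsub /vzero; ring.
  rewrite inner0r /phi /fa. have := inner_ge0 (vsub c (alpha2X nX c X)). lra.
have alx0 : alpha2X nX c x0 = a := alpha_unique (alpha_spec x0p) Ha.
have phix0 : phi x0 = inner b b / 2 by rewrite /phi /fa alx0 bdef.
have Hx0 : H x0 = y0 by rewrite /H /hYX alx0 bdef.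
have Mono : forall x x', 0 <= x -> x <= x' -> H x' <= H x.
  move=> x x' xp xx'. case: (Req_dec x x') => [->|ne]; first lra.
  have := SW x x' xp ltac:(lra). nra.
split; [|split; [|split]].
- have [pr Hpr] := @IL_Reals H phi 0 X Xp ltac:(move=> x x' ? ? ?; apply SW; lra).
  exists pr. rewrite Hpr phi0 phiX norm2_sq. field.
- have [pr Hpr] := @IL_Reals H phi x0 X Hx0X ltac:(move=> x x' ? ? ?; apply SW; lra).
  exists pr. rewrite Hpr phix0 phiX norm2_sq. field.
- set Phi := fun x => phi (Rmin x x0) + Rmin x x0 * y0.
  have HS3 : forall x x', 0 <= x -> x <= x' -> x' <= X ->
      (x' - x) * Rmax (H x' - y0) 0 <= Phi x - Phi x' <= (x' - x) * Rmax (H x - y0) 0.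
    move=> x x' xp xx' x'X. rewrite /Phi /=.
    case: (Rle_dec x' x0) => [A|A].
    + rewrite (Rmin_left x x0); last lra. rewrite (Rmin_left x' x0); last lra.
      have M1 := Mono x' x0 ltac:(lra) A. have M2 := Mono x x0 ltac:(lra) ltac:(lra).
      rewrite (Rmax_left (H x' - y0)); last lra. rewrite (Rmax_left (H x - y0)); last lra.
      have := SW x x' xp ltac:(lra). nra.
    + case: (Rle_dec x0 x) => [B|B].
      * rewrite (Rmin_right x x0); last lra. rewrite (Rmin_right x' x0); last lra.
        have M1 := Mono x0 x' x0p ltac:(lra). have M2 := Mono x0 x x0p B.
        rewrite (Rmax_right (H x' - y0)); last lra. rewrite (Rmax_right (H x - y0)); last lra. lra.
      * rewrite (Rmin_left x x0); last lra. rewrite (Rmin_right x' x0); last lra.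
        have M1 := Mono x0 x' x0p ltac:(lra). have M2 := Mono x x0 xp ltac:(lra).
        rewrite (Rmax_right (H x' - y0)); last lra. rewrite (Rmax_left (H x - y0)); last lra.
        have := SW x x0 xp x0p. nra.
  have [pr Hpr] := @IL_Reals (fun x => Rmax (H x - y0) 0) Phi 0 X Xp HS3.
  exists pr. rewrite Hpr /Phi /= (Rmin_left 0 x0); last lra. rewrite (Rmin_right X x0); last lra.
  rewrite phi0 phix0. have Na := norm2_sq a. simpl in Na. rewrite Na.
  have S1' := S1 x0p Ha. have S2' := S2 (vsub c a) (Rle_refl x0).
  rewrite bdef -/y0 in S1' S2'. rewrite Hc !inner_addl !inner_addr.
  have := inner_sym a b. lra.
- have S1' := S1 x0p Ha. have S2' := S2 (vsub c a) (Rle_refl x0).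
  rewrite bdef -/y0 in S1' S2'. rewrite inner_sym. lra.
Qed.
End Main.

Lemma vec0_all (v : Vec 0) : v = @vzero 0.
Proof. apply functional_extensionality => -[m Hm]. by []. Qed.

Theorem proposition2p5 (n : nat) (nX : Vec n -> R) (HX : is_norm nX)
  (c a b : Vec n) (Hdec : is_X2_decomp nX c a b) :
  let x0 := nX a in
  let y0 := dual_norm nX b in
  (exists pr : Riemann_integrable (hYX nX c) 0 (nX c),
      RiemannInt pr = / 2 * norm2 c ^ 2) /\
  (exists pr : Riemann_integrable (hYX nX c) x0 (nX c),
      RiemannInt pr = / 2 * norm2 b ^ 2) /\
  (exists pr : Riemann_integrable (fun x => Rmax (hYX nX c x - y0) 0) 0 (nX c),
      RiemannInt pr = / 2 * norm2 a ^ 2) /\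
  x0 * y0 = inner a b.
Proof.
destruct n as [|k].
- move=> x0 y0. rewrite /x0 /y0.
  rewrite (vec0_all c) (vec0_all a) (vec0_all b) (nX_zero HX).
  have nz : norm2 (@vzero 0) = 0 by rewrite /norm2 inner0r sqrt_0.
  rewrite nz inner0r.
  split; [|split; [|split]].
  + exists (RiemannInt_P7 _ 0). rewrite RiemannInt_P9. ring.
  + exists (RiemannInt_P7 _ 0). rewrite RiemannInt_P9. ring.
  + exists (RiemannInt_P7 _ 0). rewrite RiemannInt_P9. ring.
  + ring.
- exact: (main_pos HX ord0 Hdec).
Qed.
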